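(* Let $R$ be a unital ring, and suppose there exist unital rings $S_1,\dots,S_m$ and natural numbers $n_1,\dots,n_m\geq2$ such that $\bigoplus_{j=1}^mM_{n_j}(S_j)$ embeds unitally into $R$. Then \[ R=[R,R]_1+[R,R]_1\cdot[R,R]_1\quad\text{and}\quad R=\Sigma^3\big([R,R]_1\cdot[R,R]_1\big). \] In particular, $\xi(R)\leq3$.
   Context: $[x,y]=xy-yx$; $[R,R]_1=\{[x,y]:x,y\in R\}$; $X\cdot Y=\{xy:x\in X,y\in Y\}$; $X+Y=\{x+y:x\in X,y\in Y\}$; $\Sigma^kX=\{x_1+\dots+x_k:x_i\in X\}$. For a unital ring $T$ generated by its commutators, $\xi(T)$ is the minimal $N$ such that every element of $T$ is a sum of $N$ elements of the form $[b,c][d,e]$. *)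

(* Defs.v *)
From HB Require Import structures.
From mathcomp Require Import all_boot all_order all_algebra.
Set Implicit Arguments. Unset Strict Implicit. Unset Printing Implicit Defensive.
Import GRing.Theory.
Local Open Scope ring_scope.

Definition commr {R : pzRingType} (x y : R) : R := x * y - y * x.

Definition comm_set {R : pzRingType} : R -> Prop :=
  fun z => exists x y : R, z = commr x y.

Definition set_mul {R : pzRingType} (X Y : R -> Prop) : R -> Prop :=
  fun z => exists x y, X x /\ Y y /\ z = x * y.

Definition set_add {R : pzRingType} (X Y : R -> Prop) : R -> Prop :=
  fun z => exists x y, X x /\ Y y /\ z = x + y.

Definition set_sigma {R : pzRingType} (k : nat) (X : R -> Prop) : R -> Prop :=
  fun z => exists xs : 'I_k -> R, (forall i, X (xs i)) /\ z = \sum_(i < k) xs i.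

Definition dsum_mx (m : nat) (S : 'I_m -> pzRingType) (n : 'I_m -> nat) : Type :=
  forall j : 'I_m, 'M[S j]_(n j).

Definition unital_embedding (m : nat) (S : 'I_m -> pzRingType) (n : 'I_m -> nat)
    (R : pzRingType) (f : dsum_mx S n -> R) : Prop :=
  [/\ forall x y : dsum_mx S n, f (fun j => x j + y j) = f x + f y,
      forall x y : dsum_mx S n, f (fun j => x j *m y j) = f x * f y,
      f (fun j => 1%:M) = 1
    & injective f].

(* Main.v *)
Require Import Defs.
From HB Require Import structures.
From mathcomp Require Import all_boot all_order all_algebra.
From mathcomp Require Import zify.
From Stdlib Require Import FunctionalExtensionality.
Import GRing.Theory.
Local Open Scope ring_scope.

Definition blk (i : nat) : bool := (i < 3)%N.
Definition cnd (i j l : nat) : bool := (blk i == blk j) && (blk j == blk l).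
Definition mat := nat -> nat -> int.
Definition tens := nat -> nat -> nat -> nat -> int.
Definition sum5 (F : nat -> int) : int := F 0%N + F 1%N + F 2%N + F 3%N + F 4%N.
Definition mmul (M N : mat) : mat := fun i l =>
  sum5 (fun j => if cnd i j l then M i j * N j l else 0).
Definition msub (M N : mat) : mat := fun i j => M i j - N i j.
Definition lm (M : mat) (T : tens) : tens := fun x b c d =>
  sum5 (fun a => if cnd x a b then M x a * T a b c d else 0).
Definition rm (T : tens) (M : mat) : tens := fun a b c y =>
  sum5 (fun d => if cnd c d y then T a b c d * M d y else 0).
Definition tsub (T U : tens) : tens := fun a b c d => T a b c d - U a b c d.
Definition tadd (T U : tens) : tens := fun a b c d => T a b c d + U a b c d.
Definition idT : tens := fun a b c d => ((a == b) && (c == d))%:R.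
Definition mx_of (s : seq (seq int)) : mat := fun i j => nth 0 (nth [::] s i) j.
Definition tens_of (l : seq (nat*nat*nat*nat*int)) : tens := fun a b c d =>
  foldr (fun e acc => if [&& e.1.1.1.1 == a, e.1.1.1.2 == b, e.1.1.2 == c & e.1.2 == d]%N
                      then e.2 + acc else acc) 0 l.
Definition tcheck (T : tens) : bool :=
  all (fun a => all (fun b => all (fun c => all (fun d => T a b c d == idT a b c d)
     (iota 0 5)) (iota 0 5)) (iota 0 5)) (iota 0 5).
Definition cm (C D : mat) : mat := msub (mmul C D) (mmul D C).
Definition dA : seq (seq int) := [:: [:: 0; 0; 0; 0; 0]; [:: 0; 1; 0; 0; 0]; [:: 0; 0; 1; 0; 0]; [:: 0; 0; 0; 1; 0]; [:: 0; 0; 0; 0; 0]].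
Definition dB : seq (seq int) := [:: [:: 0; 0; 0; 0; 0]; [:: 0; 0; (-1); 0; 0]; [:: 1; 0; 0; 0; 0]; [:: 0; 0; 0; 0; 0]; [:: 0; 0; 0; 1; 0]].
Definition dC : seq (seq int) := [:: [:: 0; 0; (-1); 0; 0]; [:: 0; 0; 0; 0; 0]; [:: 0; 0; (-1); 0; 0]; [:: 0; 0; 0; (-1); 0]; [:: 0; 0; 0; 1; 0]].
Definition dD : seq (seq int) := [:: [:: 0; 0; 0; 0; 0]; [:: (-1); 0; 0; 0; 0]; [:: 0; 1; 0; 0; 0]; [:: 0; 0; 0; 0; 1]; [:: 0; 0; 0; 0; 0]].
Definition dC2 : seq (seq int) := [:: [:: (-1); 0; 0; 0; 0]; [:: 0; 0; 0; 0; 0]; [:: (-1); 0; 0; 0; 0]; [:: 0; 0; 0; (-1); 0]; [:: 0; 0; 0; (-1); 0]].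
Definition dD2 : seq (seq int) := [:: [:: 0; 1; 1; 0; 0]; [:: 0; 0; 0; 0; 0]; [:: 0; 0; 0; 0; 0]; [:: 0; 0; 0; 0; 1]; [:: 0; 0; 0; 0; 0]].
Definition dB2 : seq (seq int) := [:: [:: 1; 0; 1; 0; 0]; [:: 0; 0; 0; 0; 0]; [:: 0; 0; 0; 0; 0]; [:: 0; 0; 0; 0; (-1)]; [:: 0; 0; 0; (-1); 0]].
Definition dC3 : seq (seq int) := [:: [:: (-1); 0; 0; 0; 0]; [:: 0; 0; 1; 0; 0]; [:: 0; 0; 0; 0; 0]; [:: 0; 0; 0; (-1); 0]; [:: 0; 0; 0; 1; 0]].
Definition dD3 : seq (seq int) := [:: [:: 0; 1; 0; 0; 0]; [:: 1; 0; 0; 0; 0]; [:: 0; 0; 0; 0; 0]; [:: 0; 0; 0; (-1); 1]; [:: 0; 0; 0; 0; 0]].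
Definition dB3 : seq (seq int) := [:: [:: 0; 0; 1; 0; 0]; [:: 0; 0; 1; 0; 0]; [:: 0; 0; 0; 0; 0]; [:: 0; 0; 0; 1; 1]; [:: 0; 0; 0; 0; 0]].
Definition dX : seq (nat*nat*nat*nat*int) := [:: (0,0,1,1,(-1));
  (0,0,2,2,(-1));
  (0,0,3,3,(-1));
  (0,2,1,1,1);
  (0,2,2,2,1);
  (0,2,3,3,1);
  (1,1,0,0,1);
  (1,1,4,4,1);
  (2,0,0,0,(-1));
  (2,0,4,4,(-1));
  (2,2,0,0,1);
  (2,2,4,4,1);
  (3,3,0,0,1);
  (3,3,1,0,(-1));
  (3,3,2,0,1);
  (3,3,4,4,1);
  (3,4,0,0,1);
  (3,4,4,4,1);
  (4,3,1,1,(-1));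
  (4,3,1,2,1);
  (4,3,2,2,(-1));
  (4,3,3,3,(-1));
  (4,4,1,1,(-1));
  (4,4,2,2,(-1));
  (4,4,3,3,(-1));
  (4,4,4,3,1)].
Definition dY : seq (nat*nat*nat*nat*int) := [:: (0,0,4,3,1);
  (0,1,1,1,(-1));
  (0,1,2,2,(-1));
  (0,1,3,3,(-1));
  (0,2,1,2,(-1));
  (1,0,0,2,1);
  (1,2,2,1,(-1));
  (1,2,3,4,1);
  (2,0,4,4,1);
  (2,2,1,1,1);
  (3,3,1,1,(-1));
  (3,3,1,2,1);
  (3,3,2,2,(-1));
  (3,3,3,3,(-1));
  (3,4,0,0,1);
  (3,4,4,3,1);
  (3,4,4,4,1)].
Definition dZ1 : seq (nat*nat*nat*nat*int) := [:: (0,0,3,3,1);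
  (0,0,4,3,(-1));
  (0,1,0,0,(-1));
  (0,1,1,1,(-1));
  (0,1,2,2,(-1));
  (0,1,3,3,(-1));
  (0,1,4,4,(-1));
  (0,2,1,2,(-1));
  (0,2,3,3,(-1));
  (0,2,4,3,2);
  (1,0,0,1,1);
  (1,0,0,2,(-1));
  (1,2,0,1,(-1));
  (1,2,0,2,2);
  (1,2,2,1,(-1));
  (1,2,3,4,1);
  (2,0,3,4,1);
  (2,0,4,4,(-1));
  (2,2,1,1,1);
  (2,2,3,4,(-1));
  (2,2,4,4,2);
  (3,3,0,2,1);
  (3,3,2,0,1);
  (3,3,2,2,1);
  (3,3,3,3,(-2));
  (3,3,3,4,1);
  (3,3,4,3,(-1));
  (3,4,0,0,1);
  (3,4,0,2,1);
  (3,4,1,0,1);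
  (3,4,1,1,1);
  (3,4,1,2,1);
  (3,4,2,0,1);
  (3,4,2,2,1);
  (3,4,3,3,(-1));
  (3,4,3,4,1);
  (3,4,4,3,1);
  (4,3,0,1,(-1));
  (4,3,2,1,(-1));
  (4,4,0,1,(-1));
  (4,4,1,1,(-1))].
Definition dZ2 : seq (nat*nat*nat*nat*int) := [:: (0,0,1,1,1);
  (0,0,2,0,(-1));
  (0,0,4,3,1);
  (0,2,1,1,(-1));
  (0,2,2,0,1);
  (0,2,4,3,(-1));
  (2,0,0,0,1);
  (2,0,3,3,1);
  (2,0,4,3,(-1));
  (2,2,0,0,(-1));
  (2,2,3,3,(-1));
  (2,2,4,3,1);
  (3,3,2,0,(-1));
  (3,3,3,3,2);
  (3,3,3,4,(-4));
  (3,3,4,3,1);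
  (3,3,4,4,(-2));
  (3,4,1,0,(-1));
  (3,4,2,0,(-1));
  (3,4,3,3,2);
  (3,4,3,4,(-4));
  (3,4,4,3,(-1));
  (3,4,4,4,2);
  (4,3,1,1,(-1));
  (4,4,1,1,(-1))].
Definition dZ3 : seq (nat*nat*nat*nat*int) := [:: (3,3,3,3,3);
  (3,3,4,3,2);
  (3,4,3,3,3);
  (3,4,4,3,(-1))].
Definition T1 : tens :=
  tadd (tsub (lm (mx_of dA) (tens_of dX)) (rm (tens_of dX) (mx_of dA)))
       (lm (cm (mx_of dC) (mx_of dD)) (tsub (lm (mx_of dB) (tens_of dY)) (rm (tens_of dY) (mx_of dB)))).
Definition term (C D B : seq (seq int)) (Z : seq (nat*nat*nat*nat*int)) : tens :=
  lm (cm (mx_of C) (mx_of D)) (tsub (lm (mx_of B) (tens_of Z)) (rm (tens_of Z) (mx_of B))).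
Definition T2 : tens := tadd (term dC dD dB dZ1) (tadd (term dC2 dD2 dB2 dZ2) (term dC3 dD3 dB3 dZ3)).
Lemma check1 : tcheck T1. Proof. vm_compute. reflexivity. Qed.
Lemma check2 : tcheck T2. Proof. vm_compute. reflexivity. Qed.
Section Pat.
Variable R : pzRingType.
Variable u : nat -> nat -> R.
Hypothesis hu : forall i j k l : 'I_5,
  u i j * u k l = if (j == k) && cnd i j l then u i l else 0.
Hypothesis h1 : \sum_(i < 5) u i i = 1.

Definition elt (M : mat) : R := \sum_(i < 5) \sum_(j < 5) u i j *~ M i j.
Definition ev (T : tens) (r : R) : R :=
  \sum_(a < 5) \sum_(b < 5) \sum_(c < 5) \sum_(d < 5) (u a b * r * u c d) *~ T a b c d.

Lemma sum5E (F : nat -> int) : sum5 F = \sum_(i < 5) F i.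
Proof. by rewrite /sum5 !big_ord_recr big_ord0 /= add0r. Qed.

Lemma sum_delta (F : 'I_5 -> R) (j : 'I_5) :
  \sum_(k < 5) (if j == k then F k else 0) = F j.
Proof.
rewrite (bigD1 j) //= eqxx big1 ?addr0 // => k /negbTE.
by rewrite eq_sym => ->.
Qed.

Lemma sum_if (b : bool) (F : 'I_5 -> R) :
  \sum_(k < 5) (if b then F k else 0) = if b then \sum_(k < 5) F k else 0.
Proof. by case: b => //; rewrite big1. Qed.

Lemma elt_mul M N : elt M * elt N = elt (mmul M N).
Proof.
rewrite /elt mulr_suml; apply: eq_bigr => i _.
rewrite mulr_suml.
transitivity (\sum_(j < 5) \sum_(l < 5) (u i l *~ (if cnd i j l then M i j * N j l else 0))).
  apply: eq_bigr => j _; rewrite mulr_sumr.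
  transitivity (\sum_(k < 5) (if j == k then \sum_(l<5) u i l *~ (if cnd i j l then M i j * N j l else 0) else 0)); last by rewrite sum_delta.
  apply: eq_bigr => k _; rewrite -sum_if mulr_sumr; apply: eq_bigr => l _.
  rewrite mulrzAl mulrzAr -mulrzA hu.
  case: eqP => [->|] /=; last by rewrite mul0rz.
  by case: (cnd i k l); rewrite ?mulr0z ?mul0rz // mulrC.
rewrite exchange_big; apply: eq_bigr => l _.
by rewrite -mulrz_sumr /mmul sum5E.
Qed.

Lemma elt_sub M N : elt M - elt N = elt (msub M N).
Proof.
rewrite /elt -sumrB; apply: eq_bigr => i _; rewrite -sumrB; apply: eq_bigr => j _.
by rewrite /msub mulrzBr.
Qed.

Lemma ev_sub T U r : ev T r - ev U r = ev (tsub T U) r.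
Proof.
rewrite /ev -sumrB; apply: eq_bigr => a _; rewrite -sumrB; apply: eq_bigr => b _.
rewrite -sumrB; apply: eq_bigr => c _; rewrite -sumrB; apply: eq_bigr => d _.
by rewrite /tsub mulrzBr.
Qed.

Lemma ev_add T U r : ev T r + ev U r = ev (tadd T U) r.
Proof.
rewrite /ev -big_split; apply: eq_bigr => a _; rewrite -big_split; apply: eq_bigr => b _.
rewrite -big_split; apply: eq_bigr => c _; rewrite -big_split; apply: eq_bigr => d _.
by rewrite /tadd mulrzDr.
Qed.

Lemma ev_lm M T r : elt M * ev T r = ev (lm M T) r.
Proof.
rewrite /elt /ev mulr_suml; apply: eq_bigr => x _.
rewrite mulr_suml.
transitivity (\sum_(a < 5) \sum_(b < 5) \sum_(c < 5) \sum_(d < 5)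
   (u x b * r * u c d) *~ (if cnd x a b then M x a * T a b c d else 0)).
  apply: eq_bigr => a' _; rewrite mulr_sumr.
  transitivity (\sum_(a < 5) (if a' == a then \sum_(b < 5) \sum_(c < 5) \sum_(d < 5)
   (u x b * r * u c d) *~ (if cnd x a' b then M x a' * T a' b c d else 0) else 0)); last by rewrite sum_delta.
  apply: eq_bigr => a _; rewrite -sum_if mulr_sumr; apply: eq_bigr => b _.
  rewrite -sum_if mulr_sumr; apply: eq_bigr => c _.
  rewrite -sum_if mulr_sumr; apply: eq_bigr => d _.
  rewrite mulrzAl mulrzAr -mulrzA !mulrA hu.
  case: eqP => [->|] /=; last by rewrite !mul0r mul0rz.
  by case: (cnd x a b); rewrite ?mulr0z ?mul0r ?mul0rz // mulrC.
rewrite exchange_big; apply: eq_bigr => b _.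
rewrite exchange_big; apply: eq_bigr => c _.
rewrite exchange_big; apply: eq_bigr => d _.
by rewrite -mulrz_sumr /lm sum5E.
Qed.

Lemma ev_rm T M r : ev T r * elt M = ev (rm T M) r.
Proof.
rewrite /elt /ev mulr_suml; apply: eq_bigr => a _.
rewrite mulr_suml; apply: eq_bigr => b _.
rewrite mulr_suml; apply: eq_bigr => c _.
rewrite mulr_suml.
transitivity (\sum_(d' < 5) \sum_(y < 5)
   (u a b * r * u c y) *~ (if cnd c d' y then T a b c d' * M d' y else 0)).
  apply: eq_bigr => d' _; rewrite mulr_sumr.
  transitivity (\sum_(k < 5) (if d' == k then \sum_(y < 5)
   (u a b * r * u c y) *~ (if cnd c d' y then T a b c d' * M d' y else 0) else 0)); last by rewrite sum_delta.
  apply: eq_bigr => k _; rewrite -sum_if mulr_sumr; apply: eq_bigr => y _.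
  rewrite mulrzAl mulrzAr -mulrzA -!mulrA hu.
  case: eqP => [->|] /=; last by rewrite !mulr0 mul0rz.
  by case: (cnd c k y); rewrite ?mulr0z ?mulr0 ?mul0rz // mulrC.
rewrite exchange_big; apply: eq_bigr => y _.
by rewrite -mulrz_sumr /rm sum5E.
Qed.

Lemma ev_id (T : tens) (r : R) : (forall a b c d : 'I_5, T a b c d = idT a b c d) -> ev T r = r.
Proof.
move=> HT.
transitivity (\sum_(a < 5) \sum_(c < 5) u a a * r * u c c).
  apply: eq_bigr => a _.
  transitivity (\sum_(b < 5) (if a == b then \sum_(c < 5) u a b * r * u c c else 0)); last by rewrite sum_delta.
  apply: eq_bigr => b _; rewrite -sum_if; apply: eq_bigr => c _.
  transitivity (\sum_(d < 5) (if c == d then (if a == b then u a b * r * u c d else 0) else 0)); last first.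
    by rewrite sum_delta.
  apply: eq_bigr => d _; rewrite HT (_ : idT a b c d = ((a == b) && (c == d))%:R) //.
  by case: (a =P b) => [->|_]; case: (c =P d) => [->|_]; rewrite ?eqxx ?mulr1z ?mulr0z.
transitivity ((\sum_(a < 5) u a a) * r * (\sum_(c < 5) u c c)); last by rewrite h1 mul1r mulr1.
rewrite !mulr_suml; apply: eq_bigr => a _.
by rewrite mulr_sumr.
Qed.
End Pat.
Arguments elt {R} u M.
Arguments ev {R} u T r.
Arguments elt_mul {R u}.
Arguments elt_sub {R u}.
Arguments ev_sub {R u}.
Arguments ev_add {R u}.
Arguments ev_lm {R u}.
Arguments ev_rm {R u}.
Arguments ev_id {R u}.

Lemma tcheckP T : tcheck T -> forall a b c d : 'I_5, T a b c d = idT a b c d.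
Proof.
have mem : forall x : 'I_5, (nat_of_ord x) \in iota 0 5.
  by move=> x; rewrite mem_iota /= ltn_ord.
move=> H a b c d.
by move: H => /allP /(_ _ (mem a)) /allP /(_ _ (mem b)) /allP /(_ _ (mem c)) /allP /(_ _ (mem d)) /eqP.
Qed.


Section Claims.
Variable R : pzRingType.
Variable u : nat -> nat -> R.
Hypothesis hu : forall i j k l : 'I_5,
  u i j * u k l = if (j == k) && cnd i j l then u i l else 0.
Hypothesis h1 : \sum_(i < 5) u i i = 1.

Lemma comm_elt_ev M T r : commr (elt u M) (ev u T r) = ev u (tsub (lm M T) (rm T M)) r.
Proof. by rewrite /commr ev_lm // ev_rm // ev_sub. Qed.

Lemma comm_elt C D : commr (elt u C) (elt u D) = elt u (cm C D).
Proof. by rewrite /commr !elt_mul // elt_sub. Qed.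

Lemma claim1 r : r = commr (elt u (mx_of dA)) (ev u (tens_of dX) r) +
   commr (elt u (mx_of dC)) (elt u (mx_of dD)) * commr (elt u (mx_of dB)) (ev u (tens_of dY) r).
Proof.
rewrite !comm_elt_ev comm_elt ev_lm // ev_add //.
by rewrite ev_id //; apply: tcheckP; exact: check1.
Qed.

Lemma claim2 r : r =
   commr (elt u (mx_of dC)) (elt u (mx_of dD)) * commr (elt u (mx_of dB)) (ev u (tens_of dZ1) r) +
  (commr (elt u (mx_of dC2)) (elt u (mx_of dD2)) * commr (elt u (mx_of dB2)) (ev u (tens_of dZ2) r) +
   commr (elt u (mx_of dC3)) (elt u (mx_of dD3)) * commr (elt u (mx_of dB3)) (ev u (tens_of dZ3) r)).
Proof.
rewrite !comm_elt_ev !comm_elt !ev_lm // !ev_add //.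
by rewrite ev_id //; apply: tcheckP; exact: check2.
Qed.
End Claims.

Definition sN (n : nat) : nat := (3 * (n %% 2))%N.
Definition pos1 (n p : nat) : nat := if (p < sN n)%N then p else (3 + (p - sN n) %% 2)%N.
Definition pos2 (n p : nat) : nat := if (p < sN n)%N then 0%N else ((p - sN n) %/ 2)%N.

Lemma pos_inj n p q : (p < n)%N -> (q < n)%N -> pos1 n p = pos1 n q -> pos2 n p = pos2 n q -> p = q.
Proof.
rewrite /pos1 /pos2 /sN.
case: ifP => hp; case: ifP => hq; lia.
Qed.

Lemma pos1_lt n p : (pos1 n p < 5)%N.
Proof. rewrite /pos1 /sN; case: ifP => h; lia. Qed.

Lemma pos_ex n p j : (2 <= n)%N -> (p < n)%N -> (j < 5)%N -> blk j = blk (pos1 n p) ->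
  exists w, [/\ (w < n)%N, pos1 n w = j & pos2 n w = pos2 n p].
Proof.
rewrite /blk /pos1 /pos2 /sN => hn hp hj.
case: ifP => h1.
  move=> hb. exists j. have hp3 : (p < 3)%N by lia.
  have hj3 : (j < 3)%N by rewrite hb.
  have hs : (3 * (n %% 2) = 3)%N by lia.
  rewrite hs hj3; split => //; lia.
move=> hb. have hj3 : (3 <= j)%N.
  by rewrite leqNgt hb ltnNge leq_addr.
exists (3 * (n %% 2) + 2 * ((p - 3 * (n %% 2)) %/ 2) + (j - 3))%N.
have -> : (3 * (n %% 2) + 2 * ((p - 3 * (n %% 2)) %/ 2) + (j - 3) < 3 * (n %% 2))%N = false by lia.
split; lia.
Qed.

Section Mats.
Variable S : pzRingType.
Variable n : nat.
Hypothesis hn : (2 <= n)%N.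

Definition Ument (i k p q : nat) : bool :=
  [&& blk i == blk k, pos1 n p == i, pos1 n q == k & pos2 n p == pos2 n q].
Definition Umat (i k : nat) : 'M[S]_n := \matrix_(p, q) ((Ument i k p q)%:R : S).

Lemma natb_mul (a b : bool) : ((a%:R : S) * b%:R) = (a && b)%:R.
Proof. by case: a; case: b; rewrite ?mul1r ?mul0r. Qed.

Lemma Ument_prod (i j k l p q r : nat) : Ument i j p r && Ument k l r q ->
  [/\ (j == k) && cnd i j l, Ument i l p q, pos1 n r = j & pos2 n r = pos2 n p].
Proof.
rewrite /Ument /cnd => /andP [/and4P [/eqP bij /eqP p1 /eqP r1 /eqP e1] /and4P [/eqP bkl /eqP r1' /eqP q1 /eqP e2]].
have jk : j = k by rewrite -r1 -r1'.
rewrite -jk in bkl.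
rewrite jk eqxx bij bkl p1 q1 e1 e2 !eqxx; split => //; by rewrite -jk bkl eqxx.
Qed.

Lemma Umat_mul (i j k l : 'I_5) : Umat i j *m Umat k l = if (j == k) && cnd i j l then Umat i l else 0.
Proof.
apply/matrixP => p q; rewrite !mxE.
under eq_bigr do rewrite !mxE natb_mul.
case G : ((j == k) && cnd i j l && Ument i l p q).
  move/andP: G => [/andP [/eqP jk c] U].
  subst k; rewrite eqxx c mxE U.
  have [w [wn w1 w2]] : exists w, [/\ (w < n)%N, pos1 n w = j & pos2 n w = pos2 n p].
    have := @pos_ex n p j hn (ltn_ord p) (ltn_ord j); apply.
    move: U c; rewrite /Ument /cnd => /and4P [_ /eqP -> _ _] /andP [/eqP bij _]; by rewrite bij.
  rewrite (bigD1 (Ordinal wn)) //= big1 ?addr0.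
    suff -> : Ument i j p w && Ument j l w q by [].
    move: U c; rewrite /Ument /cnd => /and4P [/eqP bil /eqP p1 /eqP q1 /eqP e] /andP [/eqP bij /eqP bjl].
    by rewrite bij bjl p1 q1 w1 w2 e !eqxx.
  move=> r hr; case P : (Ument i j p r && Ument j l r q) => //.
  have [_ _ r1 r2] := Ument_prod _ _ _ _ _ _ _ P.
  case/negP: hr; apply/eqP/val_inj => /=; apply: (pos_inj _ _ _ (ltn_ord r) wn); congruence.
rewrite big1.
  case: ifP => c; rewrite mxE //.
  by move: G; rewrite c /= => ->.
move=> r _; case P : (Ument i j p r && Ument k l r q) => //.
have [c U _ _] := Ument_prod _ _ _ _ _ _ _ P.
by move: G; rewrite c U.
Qed.

Lemma Umat_sum : \sum_(i < 5) Umat i i = 1%:M.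
Proof.
apply/matrixP => p q; rewrite summxE !mxE.
under eq_bigr do rewrite mxE.
have hp5 := pos1_lt n p.
rewrite (bigD1 (Ordinal hp5)) //= big1 ?addr0.
  rewrite /Ument !eqxx /=.
  case: (p =P q) => [<-|pq]; first by rewrite !eqxx.
  case E : (pos1 n q == pos1 n p) => //=.
  case E2 : (pos2 n p == pos2 n q) => //.
  case: pq; apply: val_inj; apply: (pos_inj _ _ _ (ltn_ord p) (ltn_ord q)); apply/eqP => //.
  by rewrite eq_sym.
move=> i hi; rewrite /Ument.
case: (pos1 n p =P i) => [e|_]; last by rewrite andbF.
by case/negP: hi; apply/eqP/val_inj; rewrite /= e.
Qed.
End Mats.

Theorem theorem5p15 (R : pzRingType) (m : nat) (S : 'I_m -> pzRingType)
    (n : 'I_m -> nat) (hn : forall j, (2 <= n j)%N)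
    (f : dsum_mx S n -> R) (hf : unital_embedding f) :
  (forall r : R, set_add (@comm_set R) (set_mul (@comm_set R) (@comm_set R)) r) /\
  (forall r : R, set_sigma 3 (set_mul (@comm_set R) (@comm_set R)) r).
Proof.
case: hf => fadd fmul f1 _.
pose u : nat -> nat -> R := fun i k => f (fun jj => Umat (S jj) (n jj) i k).
have f0 : f (fun jj => 0) = 0.
  have := fadd (fun jj => 0) (fun jj => 0).
  rewrite (_ : (fun jj => (0 : 'M[S jj]_(n jj)) + 0) = (fun jj => 0)); last first.
    by apply: functional_extensionality_dep => jj; rewrite addr0.
  by move=> /(congr1 (fun x => x - f (fun jj => 0))); rewrite addrK subrr.
have fsum : forall (I : Type) (s : seq I) (F : I -> dsum_mx S n),
    \sum_(i <- s) f (F i) = f (fun jj => \sum_(i <- s) F i jj).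
  move=> I s F; elim: s => [|x s IH].
    rewrite big_nil -f0; congr f; apply: functional_extensionality_dep => jj.
    by rewrite big_nil.
  rewrite big_cons IH -fadd; congr f; apply: functional_extensionality_dep => jj.
  by rewrite big_cons.
have hu : forall i j k l : 'I_5,
    u i j * u k l = if (j == k) && cnd i j l then u i l else 0.
  move=> i j k l; rewrite /u -fmul.
  transitivity (f (fun jj => if (j == k) && cnd i j l then Umat (S jj) (n jj) i l else 0)).
    by congr f; apply: functional_extensionality_dep => jj; apply: Umat_mul.
  by case: ((j == k) && cnd i j l).
have h1 : \sum_(i < 5) u i i = 1.
  rewrite /u fsum -f1; congr f; apply: functional_extensionality_dep => jj.
  exact: Umat_sum.
split => r.
  exists (commr (elt u (mx_of dA)) (ev u (tens_of dX) r)).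
  exists (commr (elt u (mx_of dC)) (elt u (mx_of dD)) * commr (elt u (mx_of dB)) (ev u (tens_of dY) r)).
  split; first by exists (elt u (mx_of dA)), (ev u (tens_of dX) r).
  split; last exact: claim1.
  exists (commr (elt u (mx_of dC)) (elt u (mx_of dD))), (commr (elt u (mx_of dB)) (ev u (tens_of dY) r)).
  split; first by exists (elt u (mx_of dC)), (elt u (mx_of dD)).
  split => //; by exists (elt u (mx_of dB)), (ev u (tens_of dY) r).
pose t1 := commr (elt u (mx_of dC)) (elt u (mx_of dD)) * commr (elt u (mx_of dB)) (ev u (tens_of dZ1) r).
pose t2 := commr (elt u (mx_of dC2)) (elt u (mx_of dD2)) * commr (elt u (mx_of dB2)) (ev u (tens_of dZ2) r).
pose t3 := commr (elt u (mx_of dC3)) (elt u (mx_of dD3)) * commr (elt u (mx_of dB3)) (ev u (tens_of dZ3) r).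
exists (fun i : 'I_3 => match nat_of_ord i with 0%N => t1 | 1%N => t2 | _ => t3 end).
split; last first.
  rewrite !big_ord_recl big_ord0 /= addr0.
  exact: claim2.
move=> [[|[|[|?]]] hi] //=.
- exists (commr (elt u (mx_of dC)) (elt u (mx_of dD))), (commr (elt u (mx_of dB)) (ev u (tens_of dZ1) r)).
  split; first by exists (elt u (mx_of dC)), (elt u (mx_of dD)).
  split => //; by exists (elt u (mx_of dB)), (ev u (tens_of dZ1) r).
- exists (commr (elt u (mx_of dC2)) (elt u (mx_of dD2))), (commr (elt u (mx_of dB2)) (ev u (tens_of dZ2) r)).
  split; first by exists (elt u (mx_of dC2)), (elt u (mx_of dD2)).
  split => //; by exists (elt u (mx_of dB2)), (ev u (tens_of dZ2) r).
- exists (commr (elt u (mx_of dC3)) (elt u (mx_of dD3))), (commr (elt u (mx_of dB3)) (ev u (tens_of dZ3) r)).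
  split; first by exists (elt u (mx_of dC3)), (elt u (mx_of dD3)).
  split => //; by exists (elt u (mx_of dB3)), (ev u (tens_of dZ3) r).
Qed.
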